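(* Let $n\ge1$ and let $I=(e_1,\dots,e_n)$ be the identity matrix (standard basis). Let $W\subset\mathcal{S}^2(\mathbb{R}^n)^n$ be the subspace of $(q_1,\dots,q_n)$ such that for all $i,j=1,\dots,n$: $q_j(e_j,e_j)=0$, $\langle e_i,q_j(e_i,e_i)\rangle+\langle e_j,q_i(e_j,e_j)\rangle=0$, and $\langle e_1,q_1(e_j,e_j)\rangle=0$. If $\ker L^\Psi_I\cap W=\{0\}$, then $\ker L^\Psi_I=\operatorname{Im}L^\Phi_I$.
   Context: $\mathcal{S}^r(\mathbb{R}^n)$ denotes symmetric $r$-linear maps $(\mathbb{R}^n)^r\to\mathbb{R}^n$; $\langle\cdot,\cdot\rangle$ is the Euclidean inner product. For $v\in\mathbb{R}^n$, $Q_v(\xi,\eta)=\langle\xi,\eta\rangle v-\langle\xi,v\rangle\eta-\langle\eta,v\rangle\xi$. For $Q\in\mathcal{S}^2(\mathbb{R}^n)$ and matrices $A,C$: $Q\circ(A,C)(\xi,\eta)=Q(A\xi,C\eta)$, $A\circ Q(\xi,\eta)=A(Q(\xi,\eta))$. For $Q,Q'\in\mathcal{S}^2(\mathbb{R}^n)$, $[Q,Q'](\xi,\eta,\theta)=\{Q(\xi,Q'(\eta,\theta))+Q(\eta,Q'(\theta,\xi))+Q(\theta,Q'(\xi,\eta))\}-\{Q'(\xi,Q(\eta,\theta))+Q'(\eta,Q(\theta,\xi))+Q'(\theta,Q(\xi,\eta))\}$. For $B=(v_1,\dots,v_n)\in\mathrm{GL}_n(\mathbb{R})$, $L^\Phi_B:M_n(\mathbb{R})^2\to\mathcal{S}^2(\mathbb{R}^n)^n$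 is $L^\Phi_B(A',B'')=(A'\circ Q_{v_i}-Q_{v_i}\circ(A',I)-Q_{v_i}\circ(I,A')+Q_{\omega_i})_{1\le i\le n}$ where $B''=(\omega_1,\dots,\omega_n)$, and $L^\Psi_B(q_1,\dots,q_n)=([q_i,Q_{v_j}]-[q_j,Q_{v_i}])_{1\le i<j\le n}\in\mathcal{S}^3(\mathbb{R}^n)^{n(n-1)/2}$. Here $B=I$, so $v_i=e_i$. *)

(* Defs.v *)
From mathcomp Require Import all_boot all_order all_algebra.
From mathcomp Require Import reals.
Set Implicit Arguments. Unset Strict Implicit. Unset Printing Implicit Defensive.
Import Order.TTheory GRing.Theory Num.Theory.
Local Open Scope ring_scope.

Section Defs.
Variables (R : realType) (n : nat).

Definition vec := 'cV[R]_n.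

Definition dotv (u v : vec) : R := \sum_(k < n) u k 0 * v k 0.

(* candidate elements of S^2(R^n): maps (R^n)^2 -> R^n *)
Definition map2 := vec -> vec -> vec.

Definition is_S2 (Q : map2) : Prop :=
  (forall x y, Q x y = Q y x) /\
  (forall (a : R) x y z, Q (a *: x + y) z = a *: Q x z + Q y z).

Definition Qv (v : vec) : map2 := fun xi eta =>
  dotv xi eta *: v - dotv xi v *: eta - dotv eta v *: xi.

Definition brk (Q Q' : map2) (xi eta th : vec) : vec :=
  (Q xi (Q' eta th) + Q eta (Q' th xi) + Q th (Q' xi eta))
  - (Q' xi (Q eta th) + Q' eta (Q th xi) + Q' th (Q xi eta)).

(* L^Phi_B(A',B'') : the i-th component, v_i = col i B, omega_i = col i B'' *)
Definition LPhi (B A' B'' : 'M[R]_n) (i : 'I_n) : map2 := fun xi eta =>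
  A' *m Qv (col i B) xi eta - Qv (col i B) (A' *m xi) eta
  - Qv (col i B) xi (A' *m eta) + Qv (col i B'') xi eta.

Definition in_ker_LPsi (B : 'M[R]_n) (q : 'I_n -> map2) : Prop :=
  forall i j : 'I_n, (i < j)%N -> forall xi eta th : vec,
    brk (q i) (Qv (col j B)) xi eta th - brk (q j) (Qv (col i B)) xi eta th = 0.

Definition in_im_LPhi (B : 'M[R]_n) (q : 'I_n -> map2) : Prop :=
  exists A' B'' : 'M[R]_n, forall (i : 'I_n) (xi eta : vec),
    q i xi eta = LPhi B A' B'' i xi eta.

Definition ev (i : 'I_n) : vec := col i 1%:M.

End Defs.

(* the subspace W (dimension n.+1 >= 1, so that e_1 = ev ord0 exists) *)
Definition in_W (R : realType) (n : nat) (q : 'I_n.+1 -> map2 R n.+1) : Prop :=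
  forall i j : 'I_n.+1,
    q j (ev R j) (ev R j) = 0 /\
    dotv (ev R i) (q j (ev R i) (ev R i)) + dotv (ev R j) (q i (ev R j) (ev R j)) = 0 /\
    dotv (ev R ord0) (q ord0 (ev R j) (ev R j)) = 0.

(* Main.v *)
Require Import Defs.
From mathcomp Require Import all_boot all_order all_algebra.
From mathcomp Require Import reals.
From mathcomp Require Import ring lra.
Import Order.TTheory GRing.Theory Num.Theory.
Local Open Scope ring_scope.
Set Implicit Arguments. Unset Strict Implicit. Unset Printing Implicit Defensive.

Section S.
Variables (R : realType) (n : nat).
Implicit Types (x y z u v w : 'cV[R]_n).

Lemma dotvC x y : dotv x y = dotv y x.
Proof. by apply: eq_bigr => k _; rewrite mulrC. Qed.
Lemma dotvDl x y z : dotv (x + y) z = dotv x z + dotv y z.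
Proof. by rewrite /dotv -big_split; apply: eq_bigr => k _; rewrite !mxE mulrDl. Qed.
Lemma dotvZl (a : R) x z : dotv (a *: x) z = a * dotv x z.
Proof. by rewrite /dotv mulr_sumr; apply: eq_bigr => k _; rewrite !mxE mulrA. Qed.
Lemma dotvNl x z : dotv (- x) z = - dotv x z.
Proof. by rewrite -scaleN1r dotvZl mulN1r. Qed.
Lemma dotvBl x y z : dotv (x - y) z = dotv x z - dotv y z.
Proof. by rewrite dotvDl dotvNl. Qed.
Lemma dotvDr x y z : dotv z (x + y) = dotv z x + dotv z y.
Proof. by rewrite !(dotvC z) dotvDl. Qed.
Lemma dotvZr (a : R) x z : dotv z (a *: x) = a * dotv z x.
Proof. by rewrite !(dotvC z) dotvZl. Qed.
Lemma dotvNr x z : dotv z (- x) = - dotv z x.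
Proof. by rewrite !(dotvC z) dotvNl. Qed.
Lemma dotvBr x y z : dotv z (x - y) = dotv z x - dotv z y.
Proof. by rewrite !(dotvC z) dotvBl. Qed.

Lemma brkQQ v w x y z : brk (Qv v) (Qv w) x y z = 0.
Proof.
rewrite /brk /Qv.
rewrite !(dotvDl, dotvDr, dotvBl, dotvBr, dotvZl, dotvZr, dotvNl, dotvNr).
rewrite ?[dotv w v]dotvC ?[dotv x v]dotvC ?[dotv y v]dotvC ?[dotv z v]dotvC.
rewrite ?[dotv x w]dotvC ?[dotv y w]dotvC ?[dotv z w]dotvC.
rewrite ?[dotv y x]dotvC ?[dotv z x]dotvC ?[dotv z y]dotvC.
apply/matrixP => k l; rewrite !mxE.
ring.
Qed.

Definition delta (A : 'M[R]_n) (Q : map2 R n) : map2 R n := fun x y =>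
  A *m Q x y - Q (A *m x) y - Q x (A *m y).

Definition addr2 (Q : map2 R n) := (forall x y z, Q x (y + z) = Q x y + Q x z)
  /\ (forall x y, Q x (- y) = - Q x y).

Lemma brk_deriv A Q Q' x y z : addr2 Q -> addr2 Q' ->
  brk (delta A Q) Q' x y z + brk Q (delta A Q') x y z =
  A *m brk Q Q' x y z - brk Q Q' (A *m x) y z - brk Q Q' x (A *m y) z
   - brk Q Q' x y (A *m z).
Proof.
move=> [QD QN] [Q'D Q'N].
rewrite /brk /delta !(QD, QN, Q'D, Q'N) !(mulmxDr, mulmxN).
apply/matrixP => k l; rewrite !mxE.
ring.
Qed.

Lemma brkN Q Q' x y z : brk Q Q' x y z = - brk Q' Q x y z.
Proof. by rewrite /brk opprB. Qed.

Lemma brk_ext Q1 Q2 Q' x y z : (forall a b, Q1 a b = Q2 a b) ->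
  brk Q1 Q' x y z = brk Q2 Q' x y z.
Proof. by move=> H; rewrite /brk !H. Qed.

Lemma brk_addl Q1 Q2 Q' x y z : addr2 Q' ->
  brk (fun a b => Q1 a b + Q2 a b) Q' x y z = brk Q1 Q' x y z + brk Q2 Q' x y z.
Proof.
move=> [QD QN]; rewrite /brk !QD.
apply/matrixP => k l; rewrite !mxE; ring.
Qed.

Lemma brk_subl Q1 Q2 Q' x y z : addr2 Q' ->
  brk (fun a b => Q1 a b - Q2 a b) Q' x y z = brk Q1 Q' x y z - brk Q2 Q' x y z.
Proof.
move=> [QD QN]; rewrite /brk !QD !QN.
apply/matrixP => k l; rewrite !mxE; ring.
Qed.

Lemma Qv_addr2 v : addr2 (Qv v).
Proof.
split=> *; rewrite /Qv !(dotvDl, dotvDr, dotvNl, dotvNr);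
apply/matrixP => k l; rewrite !mxE; ring.
Qed.

Lemma QvC v x y : Qv v x y = Qv v y x.
Proof. rewrite /Qv (dotvC x y); apply/matrixP => k l; rewrite !mxE; ring. Qed.

Lemma LPhi_delta B A B'' i x y :
  LPhi B A B'' i x y = delta A (Qv (col i B)) x y + Qv (col i B'') x y.
Proof. by []. Qed.

Lemma LPhiC B A B'' i x y : LPhi B A B'' i x y = LPhi B A B'' i y x.
Proof.
rewrite /LPhi !(QvC _ x y) (QvC _ (A *m x)) (QvC _ x (A *m y)).
by rewrite -!addrA (addrCA (- _)).
Qed.

Lemma LPhi_lin B A B'' i (a : R) x y z :
  LPhi B A B'' i (a *: x + y) z = a *: LPhi B A B'' i x z + LPhi B A B'' i y z.
Proof.
rewrite /LPhi /Qv !mulmxDr !mulmxN -!scalemxAr.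
rewrite !(dotvDl, dotvDr, dotvBl, dotvBr, dotvZl, dotvZr, dotvNl, dotvNr).
rewrite ?mulmxDr ?mulmxN -?scalemxAr.
apply/matrixP => k l; rewrite !mxE. ring.
Qed.

Lemma LPhi_ker (B A B'' : 'M[R]_n) : in_ker_LPsi B (LPhi B A B'').
Proof.
move=> i j _ x y z.
have E k l : brk (LPhi B A B'' k) (Qv (col l B)) x y z =
   brk (delta A (Qv (col k B))) (Qv (col l B)) x y z.
  rewrite (@brk_ext (LPhi B A B'' k) (fun a b => delta A (Qv (col k B)) a b + Qv (col k B'') a b)) //.
  rewrite brk_addl; last exact: Qv_addr2.
  by rewrite brkQQ addr0.
rewrite !E (brkN (delta A (Qv (col j B)))) opprK brk_deriv; try exact: Qv_addr2.
rewrite !brkQQ.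
by rewrite mulmx0 !subr0.
Qed.

Lemma ev_entry (a m : 'I_n) : (ev R a) m 0 = (m == a)%:R.
Proof. by rewrite /ev !mxE. Qed.

Lemma dotv_evl a x : dotv (ev R a) x = x a 0.
Proof.
rewrite /dotv (bigD1 a) //= big1 => [|k ne]; first by rewrite ev_entry eqxx mul1r addr0.
by rewrite ev_entry (negbTE ne) mul0r.
Qed.

Lemma dotv_evr a x : dotv x (ev R a) = x a 0.
Proof. by rewrite dotvC dotv_evl. Qed.

Lemma mulmx_ev (A : 'M[R]_n) k m : (A *m ev R k) m 0 = A m k.
Proof.
rewrite mxE (bigD1 k) //= big1 => [|j ne]; first by rewrite ev_entry eqxx mulr1 addr0.
by rewrite ev_entry (negbTE ne) mulr0.
Qed.

Lemma sum_ev (A : 'M[R]_n) k m : \sum_j A m j * ev R k j 0 = A m k.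
Proof. by rewrite -mulmx_ev mxE. Qed.

Lemma entryB (u v : 'cV[R]_n) m : (u - v) m 0 = u m 0 - v m 0.
Proof. by rewrite !mxE. Qed.

Lemma LPhi_comp (A B : 'M[R]_n) i k m :
  (LPhi 1%:M A B i (ev R k) (ev R k)) m 0 =
  A m i - 2 * A k k * (m == i)%:R + 2 * A i k * (m == k)%:R
  + B m i - 2 * B k i * (m == k)%:R.
Proof.
rewrite /LPhi /Qv.
change (col i 1%:M) with (ev R i).
rewrite !mulmxDr !mulmxN -!scalemxAr.
rewrite !(dotv_evl, dotv_evr) !mulmx_ev.
rewrite !ev_entry eqxx !mxE !sum_ev /=.
ring.
Qed.
End S.

Theorem lemma2p13 (R : realType) (n : nat) :
  (forall q : 'I_n.+1 -> map2 R n.+1,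
     (forall i, is_S2 (q i)) -> in_ker_LPsi 1%:M q -> in_W q ->
     forall i xi eta, q i xi eta = 0) ->
  forall q : 'I_n.+1 -> map2 R n.+1,
    (forall i, is_S2 (q i)) ->
    (in_ker_LPsi 1%:M q <-> in_im_LPhi 1%:M q).
Proof.
move=> Hyp q Hq; split; last first.
  move=> [A [B E]] i j ij x y z.
  rewrite (@brk_ext _ _ (q i) (LPhi 1%:M A B i)) // (@brk_ext _ _ (q j) (LPhi 1%:M A B j)) //.
  exact: LPhi_ker.
move=> Hk.
pose p (k j m : 'I_n.+1) := (q j (ev R k) (ev R k)) m 0.
pose c m j := p j j m.
pose A := \matrix_(m, j) (if m == j then (if j == ord0 then 0 else -(c ord0 ord0 + p j ord0 ord0)/2)
                          else (p m j m + p j m j + c m j + c j m)/8) : 'M[R]_n.+1.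
pose B := \matrix_(m, j) (if m == j then A j j - c j j else c m j - A m j) : 'M[R]_n.+1.
pose q' := fun i (x y : 'cV[R]_n.+1) => q i x y - LPhi 1%:M A B i x y.
have S2 : forall i, is_S2 (q' i).
  move=> i; have [C L] := Hq i; split => *; rewrite /q'.
    by rewrite C LPhiC.
  by rewrite L LPhi_lin scalerBr opprD addrACA.
have K : in_ker_LPsi 1%:M q'.
  move=> i j ij x y z.
  have E k l : brk (q' k) (Qv (col l 1%:M)) x y z =
     brk (q k) (Qv (col l 1%:M)) x y z - brk (LPhi 1%:M A B k) (Qv (col l 1%:M)) x y z.
    exact: (@brk_subl R n.+1 (q k) (LPhi 1%:M A B k) (Qv (col l 1%:M)) x y z (Qv_addr2 _)).
  have h1 := Hk _ _ ij x y z; have h2 := LPhi_ker 1%:M A B ij x y z.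
  rewrite !E; move: h1 h2.
  move: (brk (q i) _ x y z) (brk (q j) _ x y z) (brk (LPhi 1%:M A B i) _ x y z) (brk (LPhi 1%:M A B j) _ x y z).
  move=> a1 b1 c1 d1 h1 h2.
  have -> : a1 - c1 - (b1 - d1) = (a1 - b1) - (c1 - d1).
    by apply/matrixP => k l; rewrite !mxE; ring.
  by rewrite h1 h2 subrr.
have W : in_W q'.
  move=> i j; split; [|split].
  - apply/matrixP => m l; rewrite (ord1 l) /q' entryB LPhi_comp /B /A !mxE /c /p.
    case: (eqVneq m j) => [->|mj]; rewrite ?eqxx /=.
      lra.
    have jm : (j == m) = false by rewrite eq_sym (negbTE mj).
    rewrite ?(negbTE mj) ?jm /=; lra.
  - rewrite !dotv_evl /q' !entryB !LPhi_comp /B /A !mxE /c /p.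
    case: (eqVneq i j) => [->|ij]; rewrite ?eqxx /=.
      lra.
    have ji : (j == i) = false by rewrite eq_sym (negbTE ij).
    rewrite ?(negbTE ij) ?ji /=; lra.
  - rewrite !dotv_evl /q' !entryB !LPhi_comp /B /A !mxE /c /p.
    case: (eqVneq j ord0) => [->|j0]; rewrite ?eqxx /=.
      lra.
    have j0' : (ord0 == j) = false by rewrite eq_sym (negbTE j0).
    rewrite ?(negbTE j0) ?j0' /=; lra.
have Z := Hyp q' S2 K W.
exists A, B => i x y; apply/eqP; rewrite -subr_eq0; apply/eqP; exact: Z i x y.
Qed.
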